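(* Let $(\mathcal{S},\mathcal{R})$ be a positive presentation. Then $(\mathcal{S},\mathcal{R})$ is $r$-complete if and only if any one of the following four conditions holds, and these four conditions are equivalent: (i) for all $u,v\in\mathcal{S}^*$, $u\equiv v$ holds if and only if $u^{-1}v\curvearrowright_r\varepsilon$; (ii) the binary relation on $\mathcal{S}^*$ defined by ''$u^{-1}v\curvearrowright_r\varepsilon$'' is transitive; (iii) the strong $r$-cube condition holds at $u,v,w$ for all $u,v,w\in\mathcal{S}^*$; (iv) the $r$-cube condition holds at $u,v,w$ for all $u,v,w\in\mathcal{S}^*$.
   Context: A positive presentation is a pair $(\mathcal{S},\mathcal{R})$ where $\mathcal{S}$ is a nonempty set of letters and $\mathcal{R}$ is a family of relations $u=v$, i.e. unordered pairs $\{u,v\}$ of nonempty words in the free monoid $\mathcal{S}^*$. $\varepsilon$ denotes the empty word; $\equiv$ is the smallest congruence on $\mathcal{S}^*$ containing all pairs of $\mathcal{R}$. Let $\mathcal{S}^{-1}=\{s^{-1}:s\in\mathcal{S}\}$ be a disjoint copy of $\mathcal{S}$; for $u\in\mathcal{S}^*$, $u^{-1}$ is obtained by reversing the order of the letters of $u$ and replacing each $s$ by $s^{-1}$. Right reversing: for words $\mathbf{w},\mathbf{w}'$ on $\mathcal{S}\cup\mathcal{S}^{-1}$ we write $\mathbf{w}\curvearrowright_r\mathbf{w}'$ if $\mathbf{w}'$ is obtained from $\mathbf{w}$ by a finite (possibly empty) sequence of steps, each of which either deletes a subword $u^{-1}u$ with $u\in\mathcal{S}^*$ nonempty, or replaces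 a subword $u^{-1}v$ with $u,v\in\mathcal{S}^*$ nonempty by a word $v'u'^{-1}$ with $u',v'\in\mathcal{S}^*$ such that $uv'=vu'$ is a relation of $\mathcal{R}$. $(\mathcal{S},\mathcal{R})$ is $r$-complete if for all $u,v,u',v'\in\mathcal{S}^*$ with $uv'\equiv vu'$ there exist $u'',v'',w\in\mathcal{S}^*$ with $u^{-1}v\curvearrowright_r v''u''^{-1}$, $u'\equiv u''w$ and $v'\equiv v''w$. For $u,v,w\in\mathcal{S}^*$: the $r$-cube condition holds at $u,v,w$ if whenever $u^{-1}ww^{-1}v\curvearrowright_r v'u'^{-1}$ with $u',v'\in\mathcal{S}^*$, there exist $u'',v'',w''\in\mathcal{S}^*$ with $u^{-1}v\curvearrowright_r v''u''^{-1}$, $u'\equiv u''w''$ and $v'\equiv v''w''$; the strong $r$-cube condition holds at $u,v,w$ if whenever $u^{-1}ww^{-1}v\curvearrowright_r v'u'^{-1}$ with $u',v'\in\mathcal{S}^*$, we have $(uv')^{-1}(vu')\curvearrowright_r\varepsilon$. *)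

(* Defs.v *)
From Stdlib Require Import List.
Import ListNotations.
Set Implicit Arguments.

Section Presentation.
Variable S : Type.

(* Words on S ∪ S^{-1}: [inl s] is the letter s, [inr s] is s^{-1}. *)
Definition sword := list (S + S).

Definition pos (u : list S) : sword := map (@inl S S) u.

Definition inv (u : list S) : sword := rev (map (@inr S S) u).

(* A family of relations is given by a predicate R; the relation u = v
   is the unordered pair {u,v}, so "uv' = vu' is a relation of R" means
   R (u v') (v u') or R (v u') (u v'). *)
Definition is_relation (R : list S -> list S -> Prop) (x y : list S) : Prop :=
  R x y \/ R y x.

Definition positive_relations (R : list S -> list S -> Prop) : Prop :=
  forall x y, R x y -> x <> [] /\ y <> [].

Definition is_congruence (E : list S -> list S -> Prop) : Prop :=
  (forall x, E x x) /\ (forall x y, E x y -> E y x) /\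
  (forall x y z, E x y -> E y z -> E x z) /\
  (forall x y a b, E x y -> E (a ++ x ++ b) (a ++ y ++ b)).

Definition equiv (R : list S -> list S -> Prop) (u v : list S) : Prop :=
  forall E, is_congruence E -> (forall x y, R x y -> E x y) -> E u v.

Inductive rev_step (R : list S -> list S -> Prop) : sword -> sword -> Prop :=
| rev_del : forall (a b : sword) (u : list S), u <> [] ->
    rev_step R (a ++ inv u ++ pos u ++ b) (a ++ b)
| rev_rel : forall (a b : sword) (u v u' v' : list S), u <> [] -> v <> [] ->
    is_relation R (u ++ v') (v ++ u') ->
    rev_step R (a ++ inv u ++ pos v ++ b) (a ++ pos v' ++ inv u' ++ b).

Inductive reverses (R : list S -> list S -> Prop) : sword -> sword -> Prop :=
| reverses_refl : forall w, reverses R w w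
| reverses_step : forall w w' w'', rev_step R w w' -> reverses R w' w'' ->
    reverses R w w''.

Definition r_complete (R : list S -> list S -> Prop) : Prop :=
  forall u v u' v' : list S, equiv R (u ++ v') (v ++ u') ->
    exists u'' v'' w : list S,
      reverses R (inv u ++ pos v) (pos v'' ++ inv u'') /\
      equiv R u' (u'' ++ w) /\ equiv R v' (v'' ++ w).

Definition r_cube (R : list S -> list S -> Prop) (u v w : list S) : Prop :=
  forall u' v' : list S,
    reverses R (inv u ++ pos w ++ inv w ++ pos v) (pos v' ++ inv u') ->
    exists u'' v'' w'' : list S,
      reverses R (inv u ++ pos v) (pos v'' ++ inv u'') /\
      equiv R u' (u'' ++ w'') /\ equiv R v' (v'' ++ w'').

Definition strong_r_cube (R : list S -> list S -> Prop) (u v w : list S) : Prop :=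
  forall u' v' : list S,
    reverses R (inv u ++ pos w ++ inv w ++ pos v) (pos v' ++ inv u') ->
    reverses R (inv (u ++ v') ++ pos (v ++ u')) [].

End Presentation.

(* Main.v *)
Require Import Defs.
From Stdlib Require Import List Lia Arith Wf_nat.
Import ListNotations.

Lemma pos_app {A} (x y : list A) : pos (x ++ y) = pos x ++ pos y.
Proof. unfold pos; apply map_app. Qed.
Lemma inv_app {A} (x y : list A) : inv (x ++ y) = inv y ++ inv x.
Proof. unfold inv; rewrite map_app, rev_app_distr; reflexivity. Qed.
Lemma inv_cons {A} (s : A) u : inv (s :: u) = inv u ++ [inr s].
Proof. reflexivity. Qed.
Lemma pos_cons {A} (s : A) u : pos (s :: u) = inl s :: pos u.
Proof. reflexivity. Qed.
Lemma inv_nil {A} : inv (@nil A) = [].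
Proof. reflexivity. Qed.
Lemma pos_nil {A} : pos (@nil A) = [].
Proof. reflexivity. Qed.

Ltac lsolve := rewrite ?pos_app, ?inv_app, ?pos_nil, ?inv_nil; repeat rewrite <- app_assoc; cbn [app];
  repeat rewrite <- app_assoc; rewrite ?app_nil_r; try reflexivity.

Lemma inv_split {A} (u : list A) x y : inv u = x ++ y ->
  exists u1 u2, u = u1 ++ u2 /\ x = inv u2 /\ y = inv u1.
Proof.
  unfold inv; intro H.
  assert (H' : map inr u = rev y ++ rev x) by (rewrite <- rev_app_distr, <- H, rev_involutive; reflexivity).
  apply map_eq_app in H' as (u1 & u2 & E & E1 & E2).
  exists u1, u2; split; [assumption|split].
  - rewrite E2, rev_involutive; reflexivity.
  - rewrite E1, rev_involutive; reflexivity.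
Qed.

Lemma pos_split {A} (v : list A) x y : pos v = x ++ y ->
  exists v1 v2, v = v1 ++ v2 /\ x = pos v1 /\ y = pos v2.
Proof.
  unfold pos; intro H. apply map_eq_app in H as (v1 & v2 & E & E1 & E2).
  exists v1, v2; auto.
Qed.

Lemma equiv_refl {A} (R : list A -> list A -> Prop) x : equiv R x x.
Proof. intros E HE _. destruct HE as (H1 & _). apply H1. Qed.
Lemma equiv_sym {A} (R : list A -> list A -> Prop) x y : equiv R x y -> equiv R y x.
Proof. intros H E HE HR. pose proof HE as (H1 & H2 & H3 & H4). apply H2, H; assumption. Qed.
Lemma equiv_trans {A} (R : list A -> list A -> Prop) x y z : equiv R x y -> equiv R y z -> equiv R x z.
Proof. intros H H' E HE HR. pose proof HE as (H1 & H2 & H3 & H4). apply H3 with y; [apply H|apply H']; assumption. Qed.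
Lemma equiv_ctx {A} (R : list A -> list A -> Prop) x y a b : equiv R x y -> equiv R (a ++ x ++ b) (a ++ y ++ b).
Proof. intros H E HE HR. pose proof HE as (H1 & H2 & H3 & H4). apply H4, H; assumption. Qed.
Lemma equiv_R {A} (R : list A -> list A -> Prop) x y : R x y -> equiv R x y.
Proof. intros H E HE HR. apply HR, H. Qed.
Lemma equiv_isrel {A} (R : list A -> list A -> Prop) x y : is_relation R x y -> equiv R x y.
Proof. intros [H|H]; [apply equiv_R, H| apply equiv_sym, equiv_R, H]. Qed.
Lemma equiv_app {A} (R : list A -> list A -> Prop) x y x' y' :
  equiv R x y -> equiv R x' y' -> equiv R (x ++ x') (y ++ y').
Proof.
  intros H H'. apply equiv_trans with (y ++ x').
  - apply (@equiv_ctx A R x y [] x' H).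
  - pose proof (@equiv_ctx A R x' y' y [] H') as K. rewrite !app_nil_r in K. exact K.
Qed.
Lemma equiv_appl {A} (R : list A -> list A -> Prop) x y z :
  equiv R x y -> equiv R (x ++ z) (y ++ z).
Proof. intro H; apply equiv_app; [exact H| apply equiv_refl]. Qed.

Lemma equiv_nil {A} (R : list A -> list A -> Prop) x :
  positive_relations R -> equiv R x [] -> x = [].
Proof.
  intros HR H.
  assert (K : x = [] <-> (@nil A) = []).
  { apply (H (fun a b => a = [] <-> b = [])).
    - split; [tauto|split; [intros; tauto| split; [intros; tauto|]]].
      intros x0 y0 a b Hxy; split; intro H0;
      apply app_eq_nil in H0; destruct H0 as [-> H0];
      apply app_eq_nil in H0; destruct H0 as [Hx ->]; cbn [app]; rewrite app_nil_r; apply Hxy; assumption.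
    - intros x0 y0 Hr. destruct (HR _ _ Hr). split; intro; contradiction. }
  apply K; reflexivity.
Qed.

Lemma equiv_nil' {A} (R : list A -> list A -> Prop) x y :
  positive_relations R -> equiv R [] (x ++ y) -> x = [] /\ y = [].
Proof. intros HR H. apply app_eq_nil, (equiv_nil R _ HR), equiv_sym, H. Qed.

Fixpoint Path {A} (R : list A -> list A -> Prop) (w : sword A) (x y : list A) : Prop :=
  match w with
  | [] => equiv R x y
  | inl s :: w' => Path R w' (x ++ [s]) y
  | inr s :: w' => exists z, equiv R x (z ++ [s]) /\ Path R w' z y
  end.

Lemma Path_equiv_l {A} (R : list A -> list A -> Prop) w : forall x x' y,
  equiv R x x' -> Path R w x y -> Path R w x' y.
Proof.
  induction w as [|[s|s] w IH]; intros x x' y E H; cbn [Path] in *.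
  - apply equiv_trans with x; [apply equiv_sym|]; assumption.
  - apply IH with (x ++ [s]); [apply equiv_appl|]; assumption.
  - destruct H as [z [Hz Hp]]. exists z; split; [|assumption].
    apply equiv_trans with x; [apply equiv_sym|]; assumption.
Qed.

Lemma Path_app {A} (R : list A -> list A -> Prop) w1 : forall w2 x y,
  Path R (w1 ++ w2) x y <-> exists m, Path R w1 x m /\ Path R w2 m y.
Proof.
  induction w1 as [|[s|s] w IH]; intros w2 x y; cbn [app Path].
  - split.
    + intro H; exists x; split; [apply equiv_refl|exact H].
    + intros [m [Hm Hp]]. apply Path_equiv_l with m; [apply equiv_sym|]; assumption.
  - apply IH.
  - split.
    + intros [z [Hz Hp]]. apply IH in Hp as [m [H1 H2]]. exists m; split; [exists z; auto|auto].
    + intros [m [[z [Hz H1]] H2]]. exists z; split; [auto|]. apply IH; exists m; auto.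
Qed.

Lemma Path_pos {A} (R : list A -> list A -> Prop) u : forall x y,
  Path R (pos u) x y <-> equiv R (x ++ u) y.
Proof.
  induction u as [|s u IH]; intros x y.
  - rewrite pos_nil, app_nil_r; cbn [Path]; reflexivity.
  - rewrite pos_cons; cbn [Path]; rewrite IH, <- app_assoc; reflexivity.
Qed.

Lemma Path_inv {A} (R : list A -> list A -> Prop) u : forall x y,
  Path R (inv u) x y <-> equiv R x (y ++ u).
Proof.
  induction u as [|s u IH]; intros x y.
  - rewrite inv_nil, app_nil_r; cbn [Path]; reflexivity.
  - rewrite inv_cons, Path_app. split.
    + intros [m [H1 H2]]. apply IH in H1. cbn [Path] in H2. destruct H2 as [z [Hz Hzy]].
      apply equiv_trans with (m ++ u); [assumption|].
      replace (y ++ s :: u) with ((y ++ [s]) ++ u) by (rewrite <- app_assoc; reflexivity).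
      apply equiv_appl. apply equiv_trans with (z ++ [s]); [assumption|apply equiv_appl; assumption].
    + intro H. exists (y ++ [s]); split.
      * apply IH. rewrite <- app_assoc; exact H.
      * cbn [Path]. exists y; split; apply equiv_refl.
Qed.
Inductive revn {A} (R : list A -> list A -> Prop) : nat -> sword A -> sword A -> Prop :=
| revn_refl : forall w, revn R 0 w w
| revn_del : forall n a b u w'', u <> [] -> revn R n (a ++ b) w'' ->
    revn R n (a ++ inv u ++ pos u ++ b) w''
| revn_rel : forall n a b u v u' v' w'', u <> [] -> v <> [] ->
    is_relation R (u ++ v') (v ++ u') -> revn R n (a ++ pos v' ++ inv u' ++ b) w'' ->
    revn R (S n) (a ++ inv u ++ pos v ++ b) w''.

Section X. End X.

Lemma revn_refl' {A} (R : list A -> list A -> Prop) w w' : w = w' -> revn R 0 w w'.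
Proof. intros ->; constructor. Qed.

Lemma revn_del' {A} (R : list A -> list A -> Prop) n w w1 w'' a b u :
  w = a ++ inv u ++ pos u ++ b -> w1 = a ++ b -> u <> [] -> revn R n w1 w'' -> revn R n w w''.
Proof. intros -> -> Hu H; constructor; assumption. Qed.

Lemma revn_rel' {A} (R : list A -> list A -> Prop) n w w1 w'' a b u v u' v' :
  w = a ++ inv u ++ pos v ++ b -> w1 = a ++ pos v' ++ inv u' ++ b -> u <> [] -> v <> [] ->
  is_relation R (u ++ v') (v ++ u') -> revn R n w1 w'' -> revn R (S n) w w''.
Proof. intros -> -> Hu Hv Hr H; econstructor; eassumption. Qed.

Lemma revn_trans {A} (R : list A -> list A -> Prop) n m w1 w2 w3 :
  revn R n w1 w2 -> revn R m w2 w3 -> revn R (n + m) w1 w3.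
Proof.
  induction 1; intro H'; simpl.
  - exact H'.
  - constructor; auto.
  - econstructor; eauto.
Qed.

Lemma revn_trans' {A} (R : list A -> list A -> Prop) n m k w1 w2 w3 :
  revn R n w1 w2 -> revn R m w2 w3 -> k = n + m -> revn R k w1 w3.
Proof. intros H1 H2 ->; eapply revn_trans; eauto. Qed.

Lemma revn_ctx {A} (R : list A -> list A -> Prop) n w w' :
  revn R n w w' -> forall c d, revn R n (c ++ w ++ d) (c ++ w' ++ d).
Proof.
  induction 1; intros c d.
  - constructor.
  - eapply revn_del' with (a := c ++ a) (b := b ++ d) (u := u); [lsolve|reflexivity|assumption|].
    specialize (IHrevn c d). rewrite <- !app_assoc in *. exact IHrevn.
  - eapply revn_rel' with (a := c ++ a) (b := b ++ d) (u := u) (v := v) (u' := u') (v' := v'); [lsolve|reflexivity|eassumption..|].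
    specialize (IHrevn c d). rewrite <- !app_assoc in *. exact IHrevn.
Qed.

Lemma revn_ctx' {A} (R : list A -> list A -> Prop) n w w' W W' c d :
  revn R n w w' -> W = c ++ w ++ d -> W' = c ++ w' ++ d -> revn R n W W'.
Proof. intros H -> ->; apply revn_ctx; exact H. Qed.

Lemma revn_eq {A} (R : list A -> list A -> Prop) n w w' w'' :
  revn R n w w' -> w' = w'' -> revn R n w w''.
Proof. intros H ->; exact H. Qed.

Lemma revn_del1 {A} (R : list A -> list A -> Prop) (u : list A) :
  u <> [] -> revn R 0 (inv u ++ pos u) [].
Proof. intro Hu. apply revn_del' with (w1 := []) (a := []) (b := []) (u := u); [lsolve|reflexivity|assumption|constructor]. Qed.

Lemma revn_rel1 {A} (R : list A -> list A -> Prop) (u v u' v' : list A) :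
  u <> [] -> v <> [] -> is_relation R (u ++ v') (v ++ u') ->
  revn R 1 (inv u ++ pos v) (pos v' ++ inv u').
Proof.
  intros. eapply revn_rel' with (a := []) (b := []) (w1 := pos v' ++ inv u') (u := u) (v := v) (u' := u') (v' := v'); [lsolve|lsolve|eassumption..|constructor].
Qed.

Lemma reverses_revn {A} (R : list A -> list A -> Prop) w w' :
  reverses R w w' <-> exists n, revn R n w w'.
Proof.
  split.
  - induction 1 as [w|w w1 w'' Hs H [n IH]].
    + exists 0; constructor.
    + destruct Hs.
      * exists n; constructor; assumption.
      * exists (S n); eapply revn_rel; eassumption.
  - intros [n H]. induction H.
    + constructor.
    + econstructor; [constructor; eassumption|assumption].
    + econstructor; [eapply rev_rel; eassumption|assumption].
Qed.

Lemma Path_revn {A} (R : list A -> list A -> Prop) n w w' :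
  revn R n w w' -> forall x y, Path R w x y -> Path R w' x y.
Proof.
  induction 1 as [w|n a b u w'' Hu H IH|n a b u v u' v' w'' Hu Hv Hr H IH]; intros x y HP.
  - exact HP.
  - apply Path_app in HP as [m1 [Ha HP]]. apply Path_app in HP as [m2 [Hu' HP]].
    apply Path_app in HP as [m3 [Hv' Hb]]. apply Path_inv in Hu'. apply Path_pos in Hv'.
    apply IH, Path_app. exists m1; split; [assumption|].
    apply Path_equiv_l with m3; [|assumption].
    apply equiv_trans with (m2 ++ u); apply equiv_sym; assumption.
  - apply Path_app in HP as [m1 [Ha HP]]. apply Path_app in HP as [m2 [Hu' HP]].
    apply Path_app in HP as [m3 [Hv' Hb]]. apply Path_inv in Hu'. apply Path_pos in Hv'.
    apply IH, Path_app. exists m1; split; [assumption|].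
    apply Path_app. exists (m1 ++ v'); split; [apply Path_pos, equiv_refl|].
    apply Path_app. exists m3; split; [|assumption].
    apply Path_inv.
    apply equiv_trans with ((m2 ++ u) ++ v'); [apply equiv_appl; assumption|].
    apply equiv_trans with ((m2 ++ v) ++ u'); [|apply equiv_appl; assumption].
    rewrite <- !app_assoc. apply equiv_isrel in Hr. apply (@equiv_ctx A R _ _ m2 []) in Hr as K.
    rewrite !app_nil_r in K; exact K.
Qed.

Lemma sound_gen {A} (R : list A -> list A -> Prop) n w p q x y :
  revn R n w (pos p ++ inv q) -> Path R w x y -> equiv R (x ++ p) (y ++ q).
Proof.
  intros H HP. eapply Path_revn in HP; [|exact H]. apply Path_app in HP as [m [H1 H2]].
  apply Path_pos in H1. apply Path_inv in H2. eapply equiv_trans; eassumption.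
Qed.

Lemma Path_iv {A} (R : list A -> list A -> Prop) u v : Path R (inv u ++ pos v) u v.
Proof.
  apply Path_app. exists []; split; [apply Path_inv, equiv_refl|apply Path_pos, equiv_refl].
Qed.

Lemma Path_cube {A} (R : list A -> list A -> Prop) u v w : Path R (inv u ++ pos w ++ inv w ++ pos v) u v.
Proof.
  apply Path_app. exists []; split; [apply Path_inv, equiv_refl|].
  apply Path_app. exists w; split; [apply Path_pos, equiv_refl|].
  apply Path_iv.
Qed.
Definition swap {A} (l : A + A) : A + A := match l with inl s => inr s | inr s => inl s end.
Definition flipw {A} (w : sword A) : sword A := rev (map swap w).
Lemma flipw_app {A} (x y : sword A) : flipw (x ++ y) = flipw y ++ flipw x.
Proof. unfold flipw; rewrite map_app, rev_app_distr; reflexivity. Qed.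
Lemma flipw_pos {A} (u : list A) : flipw (pos u) = inv u.
Proof. unfold flipw, pos, inv; rewrite map_map; reflexivity. Qed.
Lemma flipw_inv {A} (u : list A) : flipw (inv u) = pos u.
Proof. unfold flipw, pos, inv; rewrite map_rev, rev_involutive, map_map; reflexivity. Qed.

Lemma revn_flip {A} (R : list A -> list A -> Prop) n w w' :
  revn R n w w' -> revn R n (flipw w) (flipw w').
Proof.
  induction 1 as [w|n a b u w'' Hu H IH|n a b u v u' v' w'' Hu Hv Hr H IH].
  - constructor.
  - apply revn_del' with (w1 := flipw (a ++ b)) (a := flipw b) (b := flipw a) (u := u);
      [rewrite !flipw_app, flipw_inv, flipw_pos; lsolve|rewrite flipw_app; reflexivity|assumption|assumption].
  - apply revn_rel' with (w1 := flipw (a ++ pos v' ++ inv u' ++ b)) (a := flipw b) (b := flipw a)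
      (u := v) (v := u) (u' := v') (v' := u');
      [rewrite !flipw_app, flipw_inv, flipw_pos; lsolve
      |rewrite !flipw_app, flipw_inv, flipw_pos; lsolve|assumption|assumption| |assumption].
    destruct Hr as [Hr|Hr]; [right|left]; exact Hr.
Qed.

Definition Dn {A} (R : list A -> list A -> Prop) u v := exists n, revn R n (inv u ++ pos v) [].

Lemma Dn_refl {A} (R : list A -> list A -> Prop) u : Dn R u u.
Proof.
  destruct u as [|s u].
  - exists 0; constructor.
  - exists 0; apply revn_del1; discriminate.
Qed.

Lemma Dn_sym {A} (R : list A -> list A -> Prop) u v : Dn R u v -> Dn R v u.
Proof.
  intros [n H]. exists n. apply revn_flip in H.
  rewrite flipw_app, flipw_inv, flipw_pos in H. exact H.
Qed.

Lemma Dn_ctx {A} (R : list A -> list A -> Prop) x y a b : Dn R x y -> Dn R (a ++ x ++ b) (a ++ y ++ b).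
Proof.
  intros [n H]. destruct (Dn_refl R a) as [na Ha]. destruct (Dn_refl R b) as [nb Hb].
  exists (na + (n + nb)).
  eapply revn_trans.
  { eapply revn_ctx' with (c := inv b ++ inv x) (d := pos y ++ pos b); [exact Ha|lsolve|reflexivity]. }
  eapply revn_trans.
  { eapply revn_ctx' with (c := inv b) (d := pos b); [exact H|lsolve|reflexivity]. }
  eapply revn_eq; [exact Hb|]. lsolve.
Qed.

Lemma Dn_reverses {A} (R : list A -> list A -> Prop) u v : Dn R u v <-> reverses R (inv u ++ pos v) [].
Proof. unfold Dn; rewrite reverses_revn; reflexivity. Qed.

Lemma Dn_sound {A} (R : list A -> list A -> Prop) u v : Dn R u v -> equiv R u v.
Proof.
  intros [n H]. assert (K := sound_gen R n (inv u ++ pos v) [] [] u v H (Path_iv R u v)).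
  rewrite !app_nil_r in K; exact K.
Qed.

Definition pieces {A} (R : list A -> list A -> Prop) (w1 w2 : sword A) (p q : list A) (N : nat) : Prop :=
  exists p1 q1 p2 q2 p3 q3 n1 n2 n3,
    revn R n1 w1 (pos p1 ++ inv q1) /\ revn R n2 w2 (pos p2 ++ inv q2) /\
    revn R n3 (inv q1 ++ pos p2) (pos p3 ++ inv q3) /\
    p = p1 ++ p3 /\ q = q2 ++ q3 /\ n1 + n2 + n3 <= N.

Lemma pieces_pre1 {A} (R : list A -> list A -> Prop) x w1 w1' w2 p q N :
  revn R x w1 w1' -> pieces R w1' w2 p q N -> pieces R w1 w2 p q (x + N).
Proof.
  intros Hx (p1 & q1 & p2 & q2 & p3 & q3 & n1 & n2 & n3 & H1 & H2 & H3 & Hp & Hq & Hn).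
  exists p1, q1, p2, q2, p3, q3, (x + n1), n2, n3.
  split; [eapply revn_trans; eassumption|]. repeat split; auto. lia.
Qed.

Lemma pieces_pre2 {A} (R : list A -> list A -> Prop) y w1 w2 w2' p q N :
  revn R y w2 w2' -> pieces R w1 w2' p q N -> pieces R w1 w2 p q (y + N).
Proof.
  intros Hy (p1 & q1 & p2 & q2 & p3 & q3 & n1 & n2 & n3 & H1 & H2 & H3 & Hp & Hq & Hn).
  exists p1, q1, p2, q2, p3, q3, n1, (y + n2), n3.
  split; [assumption|]. split; [eapply revn_trans; eassumption|]. repeat split; auto. lia.
Qed.

Lemma pieces_glue {A} (R : list A -> list A -> Prop) x y w1 w2 A1 B k p q N :
  revn R x w1 (A1 ++ inv k) -> revn R y w2 (pos k ++ B) -> k <> [] ->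
  pieces R A1 B p q N -> pieces R w1 w2 p q (x + y + N).
Proof.
  intros Hx Hy Hk (p1 & q1 & p2 & q2 & p3 & q3 & n1 & n2 & n3 & H1 & H2 & H3 & Hp & Hq & Hn).
  exists p1, (k ++ q1), (k ++ p2), q2, p3, q3, (x + n1), (y + n2), n3.
  split; [|split; [|split]].
  - eapply revn_trans; [exact Hx|]. eapply revn_ctx' with (c := []) (d := inv k); [exact H1|lsolve|lsolve].
  - eapply revn_trans; [exact Hy|]. eapply revn_ctx' with (c := pos k) (d := []); [exact H2|lsolve|lsolve].
  - eapply revn_trans' with (n := 0); [|exact H3|reflexivity].
    eapply revn_ctx' with (c := inv q1) (d := pos p2); [apply revn_del1; exact Hk|lsolve|lsolve].
  - repeat split; auto. lia.
Qed.

Lemma position {A} (w1 w2 a b : sword A) (u v : list A) :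
  w1 ++ w2 = a ++ inv u ++ pos v ++ b -> u <> [] -> v <> [] ->
  (exists c, w1 = a ++ inv u ++ pos v ++ c /\ b = c ++ w2) \/
  (exists c, a = w1 ++ c /\ w2 = c ++ inv u ++ pos v ++ b) \/
  (w1 = a ++ inv u /\ w2 = pos v ++ b) \/
  (exists u1 u2, u1 <> [] /\ u2 <> [] /\ u = u1 ++ u2 /\ w1 = a ++ inv u2 /\ w2 = inv u1 ++ pos v ++ b) \/
  (exists v1 v2, v1 <> [] /\ v2 <> [] /\ v = v1 ++ v2 /\ w1 = a ++ inv u ++ pos v1 /\ w2 = pos v2 ++ b).
Proof.
  intros H Hu Hv.
  apply app_eq_app in H as [l [[H1 H2] | [H1 H2]]].
  2: { right; left; exists l; split; auto. }
  apply app_eq_app in H2 as [l' [[H3 H4] | [H3 H4]]].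
  -
    destruct l' as [|z l'].
    + rewrite app_nil_r in H3. subst. right; right; left; split; reflexivity.
    + destruct l as [|y l].
      * right; left. exists []. rewrite app_nil_r in H1. subst. cbn [app] in H3. rewrite <- H3.
        split; lsolve.
      * apply inv_split in H3 as (u1 & u2 & Eu & E1 & E2).
        right; right; right; left. exists u1, u2.
        split; [intro; subst; discriminate|]. split; [intro; subst; discriminate|].
        split; [assumption|]. split; [rewrite H1, E1; reflexivity|]. rewrite H4, E2; reflexivity.
  -
    apply app_eq_app in H4 as [l'' [[H5 H6] | [H5 H6]]].
    +
      apply pos_split in H5 as (v1 & v2 & Ev & E1 & E2).
      destruct v2 as [|z v2].
      * left. exists []. rewrite app_nil_r in Ev. subst. rewrite pos_nil. split; [lsolve|reflexivity].
      * destruct v1 as [|y v1].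
        -- right; right; left. subst. cbn [app]. rewrite pos_nil. split; lsolve.
        -- right; right; right; right. exists (y :: v1), (z :: v2).
           split; [discriminate|]. split; [discriminate|]. split; [assumption|].
           subst. split; [lsolve|reflexivity].
    +
      left. exists l''. subst. split; [lsolve|reflexivity].
Qed.
Definition SplitP {A} (R : list A -> list A -> Prop) n :=
  forall (w1 w2 : sword A) p q, revn R n (w1 ++ w2) (pos p ++ inv q) -> pieces R w1 w2 p q n.

Lemma split_aux {A} (R : list A -> list A -> Prop) : forall n w t, revn R n w t ->
  (forall m, m < n -> SplitP R m) ->
  forall (w1 w2 : sword A) p q, w = w1 ++ w2 -> t = pos p ++ inv q -> pieces R w1 w2 p q n.
Proof.
  induction 1 as [w|n a b u w'' Hu H IH|n a b u v u' v' w'' Hu Hv Hr H IH];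
    intros Hsmall w1 w2 p q Hw Ht.
  -
    subst w. apply app_eq_app in Ht as [l [[H1 H2] | [H1 H2]]].
    +
      apply inv_split in H2 as (q1 & q2 & Eq & E1 & E2).
      exists p, q2, [], q1, [], q2, 0, 0, 0.
      split; [apply revn_refl'; subst; reflexivity|].
      split; [apply revn_refl'; subst; lsolve|].
      split; [apply revn_refl'; lsolve|].
      split; [lsolve|]. split; [subst; lsolve|]. lia.
    + apply pos_split in H1 as (p1 & p2 & Ep & E1 & E2).
      exists p1, [], p2, q, p2, [], 0, 0, 0.
      split; [apply revn_refl'; subst; lsolve|].
      split; [apply revn_refl'; subst; lsolve|].
      split; [apply revn_refl'; lsolve|].
      split; [assumption|]. split; [lsolve|]. lia.
  -
    specialize (IH Hsmall).
    destruct (position _ _ _ _ _ _ (eq_sym Hw) Hu Hu) as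
      [(c & E1 & E2) | [(c & E1 & E2) | [(E1 & E2) | [(u1 & u2 & N1 & N2 & Eu & E1 & E2) | (v1 & v2 & N1 & N2 & Eu & E1 & E2)]]]].
    + apply pieces_pre1 with (x := 0) (w1' := a ++ c).
      * eapply revn_del' with (a := a) (b := c) (u := u); [exact E1|reflexivity|exact Hu|constructor].
      * apply IH; [rewrite E2; lsolve|exact Ht].
    + apply pieces_pre2 with (y := 0) (w2' := c ++ b).
      * eapply revn_del' with (a := c) (b := b) (u := u); [exact E2|reflexivity|exact Hu|constructor].
      * apply IH; [rewrite E1; lsolve|exact Ht].
    + apply pieces_glue with (x := 0) (y := 0) (A1 := a) (B := b) (k := u).
      * apply revn_refl'; exact E1.
      * apply revn_refl'; exact E2.
      * exact Hu.
      * apply IH; [reflexivity|exact Ht].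
    + apply pieces_glue with (x := 0) (y := 0) (A1 := a) (B := b) (k := u2).
      * apply revn_refl'; exact E1.
      * eapply revn_del' with (a := []) (b := pos u2 ++ b) (u := u1); [rewrite E2, Eu; lsolve|reflexivity|exact N1|constructor].
      * exact N2.
      * apply IH; [reflexivity|exact Ht].
    + apply pieces_glue with (x := 0) (y := 0) (A1 := a) (B := b) (k := v2).
      * eapply revn_del' with (a := a ++ inv v2) (b := []) (u := v1); [rewrite E1, Eu; lsolve|lsolve|exact N1|constructor].
      * apply revn_refl'; exact E2.
      * exact N2.
      * apply IH; [reflexivity|exact Ht].
  -
    assert (IH' := IH (fun m Hm => Hsmall m (Nat.lt_lt_succ_r _ _ Hm))). clear IH.
    destruct (position _ _ _ _ _ _ (eq_sym Hw) Hu Hv) as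
      [(c & E1 & E2) | [(c & E1 & E2) | [(E1 & E2) | [(u1 & u2 & N1 & N2 & Eu & E1 & E2) | (v1 & v2 & N1 & N2 & Eu & E1 & E2)]]]].
    + apply pieces_pre1 with (x := 1) (w1' := a ++ pos v' ++ inv u' ++ c).
      * eapply revn_rel' with (a := a) (b := c) (u := u) (v := v) (u' := u') (v' := v');
          [exact E1|reflexivity|exact Hu|exact Hv|exact Hr|constructor].
      * apply IH'; [rewrite E2; lsolve|exact Ht].
    + apply pieces_pre2 with (y := 1) (w2' := c ++ pos v' ++ inv u' ++ b).
      * eapply revn_rel' with (a := c) (b := b) (u := u) (v := v) (u' := u') (v' := v');
          [exact E2|reflexivity|exact Hu|exact Hv|exact Hr|constructor].
      * apply IH'; [rewrite E1; lsolve|exact Ht].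
    + (* boundary: double split *)
      destruct (IH' a (pos v' ++ inv u' ++ b) p q eq_refl Ht)
        as (P1 & Q1 & p2 & q2 & p3 & q3 & r1 & r2 & r3 & H1 & H2 & H3 & Hp & Hq & Hn).
      assert (H2' : revn R r2 ((pos v' ++ inv u') ++ b) (pos p2 ++ inv q2)) by (rewrite <- app_assoc; exact H2).
      destruct (Hsmall r2 ltac:(lia) _ _ _ _ H2')
        as (x & y & P2 & Q2 & z & t & s1 & s2 & s3 & G1 & G2 & G3 & Gp & Gq & Gs).
      exists P1, (u ++ Q1), (v ++ P2), Q2, p3, (t ++ q3), r1, s2, (1 + s1 + s3 + r3).
      split; [|split; [|split]].
      * eapply revn_ctx' with (c := []) (d := inv u); [exact H1|rewrite E1; lsolve|lsolve].
      * eapply revn_ctx' with (c := pos v) (d := []); [exact G2|rewrite E2; lsolve|lsolve].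
      * eapply revn_trans' with (n := 1 + s1 + s3).
        2: { eapply revn_ctx' with (c := []) (d := inv t); [exact H3| |lsolve]. rewrite Gp. lsolve. }
        2: reflexivity.
        eapply revn_trans' with (n := 1 + s1).
        2: { eapply revn_ctx' with (c := inv Q1 ++ pos x) (d := []); [exact G3|lsolve|lsolve]. }
        2: reflexivity.
        eapply revn_trans' with (n := 1).
        2: { eapply revn_ctx' with (c := inv Q1) (d := pos P2); [exact G1|lsolve|lsolve]. }
        2: reflexivity.
        apply revn_ctx' with (c := inv Q1) (d := pos P2) (w := inv u ++ pos v) (w' := pos v' ++ inv u'); [apply revn_rel1; assumption|lsolve|lsolve].
      * split; [assumption|]. split; [rewrite Hq, Gq; lsolve|]. lia.
    + replace (S n) with (0 + 1 + n) by lia.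
      apply pieces_glue with (x := 0) (y := 1) (A1 := a) (B := pos v' ++ inv u' ++ b) (k := u2).
      * apply revn_refl'; exact E1.
      * eapply revn_rel' with (a := []) (b := b) (u := u1) (v := v) (u' := u') (v' := u2 ++ v');
          [rewrite E2; lsolve|lsolve|exact N1|exact Hv| |constructor].
        subst u. rewrite <- app_assoc in Hr. exact Hr.
      * exact N2.
      * apply IH'; [reflexivity|exact Ht].
    + replace (S n) with (1 + 0 + n) by lia.
      apply pieces_glue with (x := 1) (y := 0) (A1 := a ++ pos v' ++ inv u') (B := b) (k := v2).
      * eapply revn_rel' with (a := a) (b := []) (u := u) (v := v1) (u' := v2 ++ u') (v' := v');
          [rewrite E1; lsolve|reflexivity|exact Hu|exact N1| |apply revn_refl'; lsolve].
        subst v. rewrite <- app_assoc in Hr. exact Hr.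
      * apply revn_refl'; exact E2.
      * exact N2.
      * apply IH'; [lsolve|exact Ht].
Qed.

Lemma split_all {A} (R : list A -> list A -> Prop) : forall n, SplitP R n.
Proof.
  intro n. induction n as [n IHn] using (well_founded_induction lt_wf).
  intros w1 w2 p q H. eapply split_aux; [exact H|exact IHn|reflexivity|reflexivity].
Qed.
Lemma R_Dn {A} (R : list A -> list A -> Prop) x y :
  positive_relations R -> R x y -> Dn R x y.
Proof.
  intros HR H. destruct (HR _ _ H) as [Hx Hy]. exists 1.
  apply revn_rel1 with (u' := []) (v' := []); [exact Hx|exact Hy|]. rewrite !app_nil_r; left; exact H.
Qed.

Definition Ttrans {A} (R : list A -> list A -> Prop) :=
  forall u v w : list A, reverses R (inv u ++ pos v) [] -> reverses R (inv v ++ pos w) [] ->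
        reverses R (inv u ++ pos w) [].
Definition Icond {A} (R : list A -> list A -> Prop) :=
  forall u v : list A, equiv R u v <-> reverses R (inv u ++ pos v) [].

Lemma T_to_I {A} (R : list A -> list A -> Prop) : positive_relations R -> Ttrans R -> Icond R.
Proof.
  intros HR HT u v. rewrite <- Dn_reverses. split.
  - intro H. apply (H (Dn R)).
    + split; [apply Dn_refl|split; [apply Dn_sym|split]].
      * intros x y z H1 H2. apply Dn_reverses. eapply HT; apply Dn_reverses; eassumption.
      * intros; apply Dn_ctx; assumption.
    + intros; apply R_Dn; assumption.
  - apply Dn_sound.
Qed.

Lemma I_to_T {A} (R : list A -> list A -> Prop) : Icond R -> Ttrans R.
Proof.
  intros HI u v w H1 H2. apply HI. apply HI in H1, H2. eapply equiv_trans; eassumption.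
Qed.

Lemma C_to_I {A} (R : list A -> list A -> Prop) : positive_relations R -> r_complete R -> Icond R.
Proof.
  intros HR HC u v. split.
  - intro H. destruct (HC u v [] []) as (u'' & v'' & w & Hr & E1 & E2).
    + rewrite !app_nil_r; exact H.
    + apply equiv_nil' in E1 as [-> _]; [|exact HR]. apply equiv_nil' in E2 as [-> _]; [|exact HR].
      exact Hr.
  - intro H. apply Dn_sound, Dn_reverses, H.
Qed.

Lemma I_to_C {A} (R : list A -> list A -> Prop) : Icond R -> r_complete R.
Proof.
  intros HI u v u' v' Heq. apply (proj1 (HI _ _)) in Heq. apply reverses_revn in Heq as [n Hn].
  assert (H0 : revn R n ((inv v' ++ inv u ++ pos v) ++ pos u') (pos [] ++ inv [])).
  { eapply revn_eq; [|reflexivity]. rewrite !inv_app, !pos_app in Hn. rewrite <- !app_assoc in *. exact Hn. }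
  destruct (split_all R n _ _ _ _ H0)
    as (p1 & q1 & p2 & q2 & p3 & q3 & n1 & n2 & n3 & H1 & H2 & H3 & Hp & Hq & _).
  symmetry in Hp, Hq. apply app_eq_nil in Hp as [-> ->]. apply app_eq_nil in Hq as [-> ->].
  assert (K2 := sound_gen R _ _ _ _ [] u' H2 (proj2 (Path_pos R u' [] u') (equiv_refl R _))).
  assert (K3 := sound_gen R _ _ _ _ q1 p2 H3 (Path_iv R q1 p2)).
  rewrite ?app_nil_r in K2. rewrite ?app_nil_r in K3. rewrite ?app_nil_r in K3. cbn [app] in K2.
  destruct (split_all R n1 (inv v') (inv u ++ pos v) [] q1 H1)
    as (a1 & b1 & x & y & c & d & m1 & m2 & m3 & G1 & G2 & G3 & Gp & Gq & _).
  symmetry in Gp. apply app_eq_nil in Gp as [-> ->].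
  assert (L1 := sound_gen R _ _ _ _ v' [] G1 (proj2 (Path_inv R v' v' []) (equiv_refl R _))).
  assert (L3 := sound_gen R _ _ _ _ b1 x G3 (Path_iv R b1 x)).
  rewrite !app_nil_r in L1, L3. cbn [app] in L1.
  exists y, x, d. split; [apply (proj2 (reverses_revn _ _ _)); exists m2; exact G2|split].
  - rewrite <- Gq. apply equiv_sym. eapply equiv_trans; eassumption.
  - eapply equiv_trans; eassumption.
Qed.

Lemma I_to_SC {A} (R : list A -> list A -> Prop) : Icond R -> forall u v w, strong_r_cube R u v w.
Proof.
  intros HI u v w u' v' H. apply reverses_revn in H as [n H].
  apply HI. apply (sound_gen R _ _ _ _ _ _ H (Path_cube R u v w)).
Qed.

Lemma SC_to_T {A} (R : list A -> list A -> Prop) : (forall u v w, strong_r_cube R u v w) -> Ttrans R.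
Proof.
  intros HS u v w H1 H2. apply reverses_revn in H1 as [n1 H1]. apply reverses_revn in H2 as [n2 H2].
  replace (inv u ++ pos w) with (inv (u ++ []) ++ pos (w ++ [])) by (rewrite !app_nil_r; reflexivity).
  apply (HS u w v [] []).
  apply (proj2 (reverses_revn _ _ _)). exists (n2 + n1). eapply revn_trans.
  - eapply revn_ctx' with (c := inv u ++ pos v) (d := []); [exact H2|lsolve|lsolve].
  - eapply revn_eq; [exact H1|]. reflexivity.
Qed.

Lemma Cube_to_T {A} (R : list A -> list A -> Prop) : positive_relations R ->
  (forall u v w, r_cube R u v w) -> Ttrans R.
Proof.
  intros HR HS u v w H1 H2. apply reverses_revn in H1 as [n1 H1]. apply reverses_revn in H2 as [n2 H2].
  destruct (HS u w v [] []) as (u'' & v'' & w'' & Hr & E1 & E2).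
  - apply (proj2 (reverses_revn _ _ _)). exists (n2 + n1). eapply revn_trans.
    + eapply revn_ctx' with (c := inv u ++ pos v) (d := []); [exact H2|lsolve|lsolve].
    + eapply revn_eq; [exact H1|]. reflexivity.
  - apply equiv_nil' in E1 as [-> _]; [|exact HR]. apply equiv_nil' in E2 as [-> _]; [|exact HR].
    exact Hr.
Qed.

Lemma C_to_Cube {A} (R : list A -> list A -> Prop) : r_complete R -> forall u v w, r_cube R u v w.
Proof.
  intros HC u v w u' v' H. apply reverses_revn in H as [n H].
  apply HC. apply (sound_gen R _ _ _ _ _ _ H (Path_cube R u v w)).
Qed.

Theorem proposition3p3 (S : Type) (R : list S -> list S -> Prop)
  (HS : inhabited S) (HR : positive_relations R) :
  (r_complete R <->
     (forall u v : list S, equiv R u v <-> reverses R (inv u ++ pos v) [])) /\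
  ((forall u v : list S, equiv R u v <-> reverses R (inv u ++ pos v) []) <->
     (forall u v w : list S,
        reverses R (inv u ++ pos v) [] -> reverses R (inv v ++ pos w) [] ->
        reverses R (inv u ++ pos w) [])) /\
  ((forall u v w : list S,
        reverses R (inv u ++ pos v) [] -> reverses R (inv v ++ pos w) [] ->
        reverses R (inv u ++ pos w) []) <->
     (forall u v w : list S, strong_r_cube R u v w)) /\
  ((forall u v w : list S, strong_r_cube R u v w) <->
     (forall u v w : list S, r_cube R u v w)).
Proof.
  split; [split; [apply C_to_I; exact HR|apply I_to_C]|].
  split; [split; [apply I_to_T|apply T_to_I; exact HR]|].
  split; [split; [intro H; apply I_to_SC, T_to_I; [exact HR|exact H]|apply SC_to_T]|].
  split.
  - intro H. apply C_to_Cube, I_to_C, T_to_I; [exact HR|]. apply SC_to_T; exact H.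
  - intro H. apply I_to_SC, T_to_I; [exact HR|]. apply Cube_to_T; [exact HR|exact H].
Qed.
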